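(* Let $p\geq 2$ be an integer. Then \[ c_0\!\left(\frac{1}{p}\right)=\frac{p(p-1)(p-2)}{\pi}\sum_{k\geq 0}\frac{\left(k+1-\frac{p}{2}\left\lfloor\frac{k}{p}\right\rfloor\right)\left(\left\lfloor\frac{k}{p}\right\rfloor+1\right)}{(k+1)(k+p+1)(k+2)(k+p)} . \]
   Context: For a positive integer $p$ and an integer $q$ with $1\le q\le p-1$ and $\gcd(p,q)=1$, the cotangent sum is $c_0\!\left(\frac{q}{p}\right)=-\sum_{k=1}^{p-1}\frac{k}{p}\cot\frac{\pi k q}{p}$. Here $\lfloor\cdot\rfloor$ is the floor function. *)

(* Defs.v *)
From Stdlib Require Import Reals Lra Lia.
Open Scope R_scope.

Definition cot (x : R) : R := cos x / sin x.

(* c_0(q/p) = - sum_{k=1}^{p-1} (k/p) cot(pi k q / p), for naturals p, q. *)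
Definition c0 (q p : nat) : R :=
  - sum_f 1 (p - 1)
      (fun k => (INR k / INR p) * cot (PI * INR k * INR q / INR p)).

Definition c0_term (p k : nat) : R :=
  let fl := INR (Nat.div k p) in
  ((INR k + 1 - INR p / 2 * fl) * (fl + 1)) /
  ((INR k + 1) * (INR k + INR p + 1) * (INR k + 2) * (INR k + INR p)).

(* Main.v *)
Require Import Defs.
From Stdlib Require Import Reals.
Open Scope R_scope.
From Stdlib Require Import Lra Lia.
From Coquelicot Require Import Coquelicot.
Open Scope R_scope.

Fixpoint ssum (f : nat -> R) (n : nat) : R :=
  match n with O => 0 | S n => ssum f n + f n end.

Lemma ssum_ext f g n : (forall i, (i < n)%nat -> f i = g i) -> ssum f n = ssum g n.
Proof. induction n; simpl; intros H; auto. rewrite IHn, H; auto. Qed.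

Lemma ssum_add f g n : ssum (fun i => f i + g i) n = ssum f n + ssum g n.
Proof. induction n; simpl; [ring|rewrite IHn; ring]. Qed.

Lemma ssum_sub f g n : ssum (fun i => f i - g i) n = ssum f n - ssum g n.
Proof. induction n; simpl; [ring|rewrite IHn; ring]. Qed.

Lemma ssum_scal c f n : ssum (fun i => c * f i) n = c * ssum f n.
Proof. induction n; simpl; [ring|rewrite IHn; ring]. Qed.

Lemma ssum_const c n : ssum (fun _ => c) n = INR n * c.
Proof. induction n; simpl ssum; [simpl; ring|rewrite IHn, S_INR; ring]. Qed.

Lemma ssum_shift1 f n : ssum f (S n) = f O + ssum (fun i => f (S i)) n.
Proof. induction n; simpl in *; [ring|]. rewrite IHn; ring. Qed.

Lemma ssum_split f a b : ssum f (a + b) = ssum f a + ssum (fun i => f (a + i)%nat) b.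
Proof. induction b; simpl. rewrite Nat.add_0_r; ring. rewrite Nat.add_succ_r; simpl; rewrite IHb; ring. Qed.

Lemma ssum_swap (f : nat -> nat -> R) n m :
  ssum (fun i => ssum (fun j => f i j) m) n = ssum (fun j => ssum (fun i => f i j) n) m.
Proof.
  induction n; simpl.
  - induction m; simpl; auto. rewrite <- IHm; ring.
  - rewrite IHn, <- ssum_add. reflexivity.
Qed.

Lemma ssum_rev f n : ssum f n = ssum (fun i => f (n - 1 - i)%nat) n.
Proof.
  induction n; auto.
  change (ssum f (S n)) with (ssum f n + f n).
  rewrite (ssum_shift1 (fun i => f (S n - 1 - i)%nat)). replace (S n - 1 - 0)%nat with n by lia.
  rewrite IHn. rewrite Rplus_comm. f_equal. apply ssum_ext; intros i Hi. f_equal; lia.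
Qed.

Lemma sum_f_R0_ssum f n : sum_f_R0 f n = ssum f (S n).
Proof. induction n; simpl in *; [ring|rewrite IHn; reflexivity]. Qed.

Lemma ssum_abs_le f g n : (forall i, (i < n)%nat -> Rabs (f i) <= g i) -> Rabs (ssum f n) <= ssum g n.
Proof.
  induction n; simpl; intros H. rewrite Rabs_R0; lra.
  eapply Rle_trans. apply Rabs_triang. apply Rplus_le_compat; auto.
Qed.

Lemma dirichlet t L : 2 * sin (t/2) * ssum (fun i => cos (INR (S i) * t)) L
   = sin ((INR L + /2) * t) - sin (t/2).
Proof.
  induction L; cbn [ssum].
  - simpl. replace ((0 + /2) * t) with (t/2) by field. ring.
  - rewrite Rmult_plus_distr_l. rewrite IHL.
    replace ((INR (S L) + /2) * t) with (INR (S L) * t + t/2) by (rewrite S_INR; field).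
    replace ((INR L + /2) * t) with (INR (S L) * t - t/2) by (rewrite S_INR; field).
    rewrite sin_plus, sin_minus. ring.
Qed.

Lemma ssum_le f g n : (forall i, (i < n)%nat -> f i <= g i) -> ssum f n <= ssum g n.
Proof. induction n; simpl; intros H. lra. apply Rplus_le_compat; auto. Qed.

Lemma div_le a b c d : 0 < b -> 0 < d -> a * d <= c * b -> a / b <= c / d.
Proof.
  intros Hb Hd H. assert (a / b - c / d = (a * d - c * b) / (b * d)) by (field; lra).
  assert ((a * d - c * b) / (b * d) <= 0).
  { unfold Rdiv. assert (0 < / (b * d)) by (apply Rinv_0_lt_compat; nra). nra. }
  lra.
Qed.

Lemma ssum_scal_r c f n : ssum (fun i => f i * c) n = ssum f n * c.
Proof. induction n; simpl; [ring|rewrite IHn; ring]. Qed.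

Definition Fs (L : nat) (t : R) : R := ssum (fun m => sin (INR (S m) * t) / INR (S m)) L.

Lemma Fs_derive L t : is_derive (Fs L) t (ssum (fun m => cos (INR (S m) * t)) L).
Proof.
  induction L.
  - unfold Fs; simpl. apply (is_derive_const (K:=R_AbsRing) 0).
  - change (is_derive (fun t => Fs L t + sin (INR (S L) * t) / INR (S L)) t
       (ssum (fun m => cos (INR (S m) * t)) L + cos (INR (S L) * t))).
    assert (Ha : INR (S L) <> 0) by (apply not_0_INR; lia).
    set (a := INR (S L)) in *.
    apply (is_derive_plus (K:=R_AbsRing) (V:=R_NormedModule)). exact IHL.
    auto_derive. auto. field. auto.
Qed.

Lemma sin_nat_PI n : sin (INR n * PI) = 0.
Proof.
  induction n. simpl. rewrite Rmult_0_l; apply sin_0.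
  rewrite S_INR, Rmult_plus_distr_r, Rmult_1_l, neg_sin, IHn. ring.
Qed.

Lemma Fs_PI L : Fs L PI = 0.
Proof.
  unfold Fs. induction L; cbn [ssum]. auto. rewrite IHL, sin_nat_PI. unfold Rdiv. ring.
Qed.

Section Saw.
Variable L : nat.
Let lam := INR L + /2.
Definition Phi (t : R) := Fs L t + t/2 + cos (lam * t) / (2 * lam * sin (t/2)).

Lemma lam_pos : 0 < lam.
Proof. unfold lam. pose proof (pos_INR L). lra. Qed.

Lemma Phi_derive t : sin (t/2) <> 0 ->
  is_derive Phi t (- (cos (lam * t) * cos (t/2)) / (4 * lam * sin (t/2) ^ 2)).
Proof.
  intros Hs. pose proof lam_pos as Hl.
  pose proof (Fs_derive L t) as HF.
  assert (HG : is_derive (fun t => t/2 + cos (lam * t) / (2 * lam * sin (t/2))) t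
     (/2 + (- sin (lam * t) * lam * (2 * lam * sin (t/2)) - cos (lam * t) * (2 * lam * (cos (t/2) * /2)))
         / (2 * lam * sin (t/2)) ^ 2)).
  { auto_derive. change (t * /2) with (t/2).
    repeat apply Rmult_integral_contrapositive_currified; auto; lra.
    change (t * /2) with (t/2). field. split; auto. lra. }
  pose proof (is_derive_plus (K:=R_AbsRing) (V:=R_NormedModule) _ _ _ _ _ HF HG) as H.
  apply (is_derive_ext _ Phi) in H. 2:{ intros; simpl. unfold plus; simpl. unfold Phi. ring. }
  unfold plus in H; simpl in H.
  replace (- (cos (lam * t) * cos (t/2)) / (4 * lam * sin (t/2) ^ 2)) with
    (ssum (fun m => cos (INR (S m) * t)) L +
     (/2 + (- sin (lam * t) * lam * (2 * lam * sin (t/2)) - cos (lam * t) * (2 * lam * (cos (t/2) * /2)))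
         / (2 * lam * sin (t/2)) ^ 2)); auto.
  assert (D := dirichlet t L). fold lam in D.
  replace (ssum (fun m => cos (INR (S m) * t)) L) with ((sin (lam * t) - sin (t/2)) / (2 * sin (t/2))).
  field. split; auto; lra.
  rewrite <- D. field. auto.
Qed.

Lemma Phi_PI : Phi PI = PI / 2.
Proof.
  unfold Phi. rewrite Fs_PI. unfold lam.
  replace ((INR L + /2) * PI) with (INR L * PI + PI/2) by field.
  rewrite cos_plus, cos_PI2, sin_PI2, sin_nat_PI. unfold Rdiv. ring.
Qed.


Lemma abs_div_le u D E : -1 <= u <= 1 -> 0 < E <= D -> Rabs (u / D) <= / E.
Proof.
  intros Hu HE. assert (0 < / D) by (apply Rinv_0_lt_compat; lra).
  assert (/ D <= / E) by (apply Rinv_le_contravar; lra).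
  apply Rabs_le. unfold Rdiv. split; nra.
Qed.

Lemma sin_half_ge th c : 0 < th < 2 * PI ->
  ((th <= c <= PI) \/ (PI <= c <= th)) -> sin (th/2) <= sin (c/2).
Proof.
  intros H [Hc|Hc]; pose proof PI_RGT_0.
  - apply sin_incr_1; lra.
  - rewrite <- (sin_PI_x (th/2)), <- (sin_PI_x (c/2)). apply sin_incr_1; lra.
Qed.

Lemma saw_bound th : 0 < th < 2 * PI ->
  Rabs (Fs L th - (PI - th)/2) <= PI * / (4 * lam * sin (th/2) ^ 2) + / (2 * lam * sin (th/2)).
Proof.
  intros Hth. pose proof PI_RGT_0. pose proof lam_pos as Hl.
  set (s := sin (th/2)).
  assert (Hs : 0 < s) by (apply sin_gt_0; lra).
  set (dP := fun t => - (cos (lam * t) * cos (t/2)) / (4 * lam * sin (t/2) ^ 2)).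
  assert (Hd : forall c, ((th <= c <= PI) \/ (PI <= c <= th)) ->
     derivable_pt_lim Phi c (dP c) /\ Rabs (dP c) <= / (4 * lam * s ^ 2)).
  { intros c Hc. pose proof (sin_half_ge th c Hth Hc) as Hsc. fold s in Hsc. split.
    - apply is_derive_Reals. apply Phi_derive. lra.
    - unfold dP. apply abs_div_le.
      + pose proof (COS_bound (lam * c)). pose proof (COS_bound (c/2)). split; nra.
      + split. apply Rmult_lt_0_compat; [lra| apply pow_lt; lra]. apply Rmult_le_compat_l. lra. apply pow_incr. lra. }
  assert (HM : Rabs (Phi th - Phi PI) <= PI * / (4 * lam * s ^ 2)).
  { destruct (Rtotal_order th PI) as [Hlt|[Heq|Hgt]].
    - destruct (MVT_cor2 Phi dP th PI Hlt) as [c [Hc1 Hc2]].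
      { intros c Hc. apply Hd. lra. }
      rewrite Rabs_minus_sym, Hc1, Rabs_mult. destruct (Hd c (or_introl (conj (Rlt_le _ _ (proj1 Hc2)) (Rlt_le _ _ (proj2 Hc2))))) as [_ Hb].
      rewrite Rmult_comm. apply Rmult_le_compat. apply Rabs_pos. apply Rabs_pos.
      rewrite Rabs_right; lra. auto.
    - subst th. rewrite Rminus_diag, Rabs_R0. apply Rmult_le_pos. lra. apply Rlt_le, Rinv_0_lt_compat. apply Rmult_lt_0_compat; [lra| apply pow_lt; lra].
    - destruct (MVT_cor2 Phi dP PI th Hgt) as [c [Hc1 Hc2]].
      { intros c Hc. apply Hd. lra. }
      rewrite Hc1, Rabs_mult. destruct (Hd c (or_intror (conj (Rlt_le _ _ (proj1 Hc2)) (Rlt_le _ _ (proj2 Hc2))))) as [_ Hb].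
      rewrite Rmult_comm. apply Rmult_le_compat. apply Rabs_pos. apply Rabs_pos.
      rewrite Rabs_right; lra. auto. }
  rewrite Phi_PI in HM.
  replace (Fs L th - (PI - th)/2) with ((Phi th - PI/2) + (- cos (lam * th)) / (2 * lam * s)).
  2:{ unfold Phi. fold s. field. lra. }
  eapply Rle_trans. apply Rabs_triang. apply Rplus_le_compat. auto.
  apply abs_div_le. pose proof (COS_bound (lam * th)). lra. nra.
Qed.

End Saw.

Lemma sin_pos_frac k p : (0 < k < p)%nat -> 0 < sin (PI * INR k / INR p).
Proof.
  intros H. apply sin_gt_0.
  - apply Rdiv_lt_0_compat. apply Rmult_lt_0_compat. apply PI_RGT_0. apply lt_0_INR; lia. apply lt_0_INR; lia.
  - assert (INR k < INR p) by (apply lt_INR; lia). assert (0 < INR p) by (apply lt_0_INR; lia).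
    apply Rmult_lt_reg_r with (INR p); auto. unfold Rdiv. rewrite Rmult_assoc, Rinv_l by lra.
    pose proof PI_RGT_0. nra.
Qed.

Lemma cos_sum_roots p k : (1 <= k < p)%nat ->
  ssum (fun j => cos (2 * INR k * (PI * INR (S j) / INR p))) (p - 1) = -1.
Proof.
  intros H.
  assert (Hp : 0 < INR p) by (apply lt_0_INR; lia).
  set (t := 2 * PI * INR k / INR p).
  assert (Hs : 0 < sin (t/2)).
  { replace (t/2) with (PI * INR k / INR p) by (unfold t; field; lra). apply sin_pos_frac; lia. }
  pose proof (dirichlet t (p-1)) as D.
  rewrite (ssum_ext _ (fun i => cos (INR (S i) * t))).
  2:{ intros i _. f_equal. unfold t. field. lra. }
  replace ((INR (p - 1) + / 2) * t) with (- (t/2) + 2 * INR k * PI) in D.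
  2:{ rewrite minus_INR by lia. simpl INR. unfold t. field. lra. }
  rewrite sin_period, sin_neg in D.
  apply Rmult_eq_reg_l with (2 * sin (t/2)). rewrite D. ring. lra.
Qed.

Lemma cot_sin_sum phi r : sin phi <> 0 ->
  cos phi / sin phi * sin (2 * INR r * phi)
  = ssum (fun k => cos (2 * INR k * phi) + cos (2 * INR (S k) * phi)) r.
Proof.
  intros Hs. induction r; cbn [ssum].
  - simpl. rewrite Rmult_0_r, Rmult_0_l, sin_0. ring.
  - rewrite <- IHr.
    set (a := (2 * INR r + 1) * phi).
    replace (2 * INR (S r) * phi) with (a + phi) by (unfold a; rewrite S_INR; ring).
    replace (2 * INR r * phi) with (a - phi) by (unfold a; ring).
    rewrite sin_plus, sin_minus, cos_plus, cos_minus. field. auto.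
Qed.

Lemma cot_sin_identity p r : (2 <= p)%nat -> (1 <= r <= p - 1)%nat ->
  ssum (fun j => cot (PI * INR (S j) / INR p) * sin (2 * INR r * (PI * INR (S j) / INR p))) (p-1)
  = INR p - 2 * INR r.
Proof.
  intros Hp Hr.
  rewrite (ssum_ext _ (fun j => ssum (fun k => cos (2 * INR k * (PI * INR (S j) / INR p)) +
       cos (2 * INR (S k) * (PI * INR (S j) / INR p))) r)).
  2:{ intros j Hj. unfold cot. apply cot_sin_sum. apply Rgt_not_eq, sin_pos_frac. lia. }
  rewrite ssum_swap.
  replace r with (1 + (r - 1))%nat at 1 by lia.
  rewrite ssum_split. cbn [ssum].
  rewrite ssum_add. rewrite (cos_sum_roots p 1) by lia.
  rewrite (ssum_ext _ (fun _ => 1)).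
  2:{ intros. simpl INR. rewrite Rmult_0_r, Rmult_0_l, cos_0. reflexivity. }
  rewrite ssum_const.
  rewrite (ssum_ext _ (fun _ => -2)).
  2:{ intros i Hi. rewrite ssum_add. rewrite !cos_sum_roots by lia. ring. }
  rewrite ssum_const. rewrite !minus_INR by lia. simpl INR. ring.
Qed.

Lemma cot_sum_zero p : (2 <= p)%nat ->
  ssum (fun j => cot (PI * INR (S j) / INR p)) (p-1) = 0.
Proof.
  intros Hp.
  assert (Hp' : 0 < INR p) by (apply lt_0_INR; lia).
  assert (H : ssum (fun j => cot (PI * INR (S j) / INR p)) (p-1) =
              - ssum (fun j => cot (PI * INR (S j) / INR p)) (p-1)).
  { rewrite ssum_rev at 1.
    transitivity (ssum (fun j => -1 * cot (PI * INR (S j) / INR p)) (p-1)).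
    2:{ rewrite ssum_scal. ring. }
    apply ssum_ext; intros i Hi.
    replace (PI * INR (S (p - 1 - 1 - i)) / INR p) with (PI - PI * INR (S i) / INR p).
    2:{ rewrite !S_INR, !minus_INR by lia. simpl INR. field. lra. }
    unfold cot. rewrite sin_PI_x, Rtrigo_facts.cos_pi_minus. field.
    apply Rgt_not_eq, sin_pos_frac. lia. }
  lra.
Qed.

Lemma ssum_shiftS g n : ssum (fun r => g (S r)) n = ssum g n - g O + g n.
Proof.
  pose proof (ssum_shift1 g n) as H. change (ssum g (S n)) with (ssum g n + g n) in H. lra.
Qed.

Definition Hn (p n : nat) : R := ssum (fun r => / (INR n * INR p + INR r + 1)) p.

Lemma c0_term_block p n r : (r < p)%nat ->
  c0_term p (n * p + r) =
  ((INR n * INR p + INR r + 1 - INR p / 2 * INR n) * (INR n + 1)) /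
  ((INR n * INR p + INR r + 1) * (INR n * INR p + INR r + INR p + 1) *
   (INR n * INR p + INR r + 2) * (INR n * INR p + INR r + INR p)).
Proof.
  intros Hr. unfold c0_term.
  assert (Hd : Nat.div (n * p + r) p = n).
  { rewrite Nat.div_add_l by lia. rewrite Nat.div_small by lia. lia. }
  rewrite Hd, plus_INR, mult_INR. f_equal; ring.
Qed.

Lemma pf_identity P y A : 2 <= P -> 0 < A ->
  P*(P-1)*(P-2)*(((A - P/2*y)*(y+1))/(A*(A+P)*(A+1)*(A+P-1))) =
  (y+1)*((P-2)*(-P*y/2)/A - (P-2)*(-P*y/2-P)/(A+P) - P*(-P*y/2-1)/(A+1) + P*(-P*y/2-P+1)/(A+P-1)).
Proof. intros. field. lra. Qed.

Definition Tb (p n : nat) : R :=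
  ssum (fun r => (INR p - 2 * INR (S r)) / (INR n * INR p + INR (S r))) (p - 1).
Definition Gn (p n : nat) : R := INR p * INR n ^ 2 * Hn p n.
Definition Rn (p n : nat) : R :=
  INR p - (INR p - 1) / 2 * (/ (INR n * INR p + 1) - / (INR (S n) * INR p + 1))
  + / (INR n + 2) - / (INR n + 1).

Section Block.
Variables p n : nat.
Hypothesis Hp : (2 <= p)%nat.
Let P := INR p.
Let X := INR n.

Lemma P_ge2 : 2 <= P.
Proof. unfold P. replace 2 with (INR 2) by (simpl; ring). apply le_INR; lia. Qed.
Lemma X_ge0 : 0 <= X.
Proof. apply pos_INR. Qed.

Lemma S2 : ssum (fun r => / (X * P + INR r + 2)) p = Hn p n - / (X * P + 1) + / (X * P + P + 1).
Proof.
  transitivity (ssum (fun r => / (X * P + INR (S r) + 1)) p).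
  { apply ssum_ext. intros i _. rewrite S_INR. f_equal; ring. }
  rewrite (ssum_shiftS (fun r => / (X * P + INR r + 1))).
  unfold Hn. fold P X. simpl INR. fold P. rewrite Rplus_0_r. reflexivity.
Qed.

Lemma S4 : ssum (fun r => / (X * P + INR r + P + 1)) p = Hn p (S n).
Proof.
  unfold Hn. fold P. apply ssum_ext. intros i _. rewrite S_INR. fold X. f_equal; ring.
Qed.

Lemma S3 : ssum (fun r => / (X * P + INR r + P)) p = Hn p (S n) + / ((X + 1) * P) - / ((X + 1) * P + P).
Proof.
  pose proof (ssum_shiftS (fun r => / (X * P + INR r + P)) p) as H.
  rewrite (ssum_ext _ (fun r => / (INR (S n) * INR p + INR r + 1))) in H.
  2:{ intros i _. rewrite !S_INR. fold P X. f_equal; ring. }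
  fold (Hn p (S n)) in H. simpl INR in H at 2. fold P in H.
  replace (X * P + 0 + P) with ((X+1)*P) in H by ring.
  replace (X * P + P + P) with ((X+1)*P + P) in H by ring. lra.
Qed.

Lemma Tb_H : Tb p n = (P + 2 * X * P) * (Hn p n - / (X * P + P)) - 2 * (P - 1).
Proof.
  pose proof P_ge2. pose proof X_ge0.
  unfold Tb. fold P X.
  rewrite (ssum_ext _ (fun r => (P + 2 * X * P) * / (X * P + INR r + 1) - 2)).
  2:{ intros i _. rewrite S_INR. field. pose proof (pos_INR i). nra. }
  rewrite ssum_sub, ssum_scal, ssum_const.
  assert (E : Hn p n = ssum (fun r => / (X * P + INR r + 1)) (p - 1) + / (X * P + P)).
  { unfold Hn. replace p with (S (p - 1)) at 1 by lia. cbn [ssum]. fold X P.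
    rewrite minus_INR by lia. simpl INR. f_equal. f_equal. fold P. ring. }
  rewrite E, minus_INR by lia. simpl INR. fold P. ring.
Qed.

Lemma block_identity :
  P * (P - 1) * (P - 2) * ssum (fun r => c0_term p (n * p + r)) p
  = Tb p n + Gn p n - Gn p (S n) + Rn p n.
Proof.
  pose proof P_ge2 as HP. pose proof X_ge0 as HX.
  rewrite <- ssum_scal.
  rewrite (ssum_ext _ (fun r => (X + 1) * ((P-2)*(-P*X/2) * / (X * P + INR r + 1)
        - (P-2)*(-P*X/2-P) * / (X * P + INR r + P + 1)
        - P*(-P*X/2-1) * / (X * P + INR r + 2) + P*(-P*X/2-P+1) * / (X * P + INR r + P)))).
  2:{ intros i Hi. rewrite c0_term_block by auto. fold P X.
      pose proof (pos_INR i).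
      assert (0 <= X * P) by nra.
      field. repeat split; nra. }
  rewrite ssum_scal. rewrite !ssum_add, !ssum_sub, !ssum_scal.
  fold (Hn p n). rewrite S2, S3, S4.
  rewrite Tb_H. unfold Gn, Rn. fold P X. rewrite S_INR. fold X.
  change (ssum (fun i => / (X * P + INR i + 1)) p) with (Hn p n).
  generalize (Hn p n) (Hn p (S n)). clearbody P X. intros h1 h2.
  field. repeat split; nra.
Qed.
End Block.


Lemma sum_blocks f N p : ssum f (N * p) = ssum (fun n => ssum (fun r => f (n * p + r)%nat) p) N.
Proof.
  induction N; simpl; auto.
  replace (p + N * p)%nat with (N * p + p)%nat by lia. rewrite ssum_split, IHN. reflexivity.
Qed.

Lemma partial_blocks p N : (2 <= p)%nat ->
  INR p * (INR p - 1) * (INR p - 2) * ssum (c0_term p) (N * p)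
  = ssum (Tb p) N - Gn p N + ssum (Rn p) N.
Proof.
  intros Hp. rewrite sum_blocks, <- ssum_scal.
  induction N; cbn [ssum].
  - unfold Gn. simpl. ring.
  - rewrite IHN. rewrite block_identity by auto. ring.
Qed.

Lemma Rn_sum p N : (2 <= p)%nat ->
  ssum (Rn p) N = INR p * INR N - (INR p - 1) / 2 * (1 - / (INR N * INR p + 1)) + / (INR N + 1) - 1.
Proof.
  intros Hp. assert (HP : 0 < INR p) by (apply lt_0_INR; lia).
  induction N; cbn [ssum].
  - simpl. field.
  - rewrite IHN. unfold Rn. rewrite S_INR. pose proof (pos_INR N).
    field. repeat split; nra.
Qed.

Definition phi_ p j := PI * INR (S j) / INR p.
Definition th_ p j := 2 * PI * INR (S j) / INR p.

Lemma inner_lt p n r : (2 <= p)%nat -> (r < p - 1)%nat ->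
  ssum (fun j => cot (phi_ p j) * (sin (INR (S (n * p + r)) * th_ p j) / INR (S (n * p + r)))) (p - 1)
  = (INR p - 2 * INR (S r)) / (INR n * INR p + INR (S r)).
Proof.
  intros Hp Hr. assert (HP : 0 < INR p) by (apply lt_0_INR; lia).
  rewrite (ssum_ext _ (fun j => / (INR n * INR p + INR (S r)) *
     (cot (PI * INR (S j) / INR p) * sin (2 * INR (S r) * (PI * INR (S j) / INR p))))).
  2:{ intros j Hj. unfold phi_, th_.
      replace (INR (S (n * p + r)) * (2 * PI * INR (S j) / INR p)) with
        (2 * INR (S r) * (PI * INR (S j) / INR p) + 2 * INR (n * S j) * PI).
      2:{ rewrite !S_INR, mult_INR, plus_INR, mult_INR, S_INR. field. lra. }
      rewrite sin_period. replace (INR (S (n * p + r))) with (INR n * INR p + INR (S r)).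
      2:{ rewrite !S_INR, plus_INR, mult_INR. ring. }
      field. pose proof (pos_INR n). pose proof (pos_INR r). rewrite S_INR. nra. }
  rewrite ssum_scal, cot_sin_identity by lia. field.
  pose proof (pos_INR n). pose proof (pos_INR r). rewrite S_INR. nra.
Qed.

Lemma inner_last p n : (2 <= p)%nat ->
  ssum (fun j => cot (phi_ p j) * (sin (INR (S (n * p + (p - 1))) * th_ p j) / INR (S (n * p + (p - 1))))) (p - 1) = 0.
Proof.
  intros Hp. assert (HP : 0 < INR p) by (apply lt_0_INR; lia).
  rewrite (ssum_ext _ (fun _ => 0)). rewrite ssum_const; ring.
  intros j Hj. unfold th_.
  replace (INR (S (n * p + (p - 1))) * (2 * PI * INR (S j) / INR p)) with (0 + 2 * INR (S n * S j) * PI).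
  2:{ replace (S (n * p + (p - 1))) with (S n * p)%nat by lia. rewrite !mult_INR, !S_INR. field. lra. }
  rewrite sin_period, sin_0. unfold Rdiv. ring.
Qed.

Lemma Tb_Fs p N : (2 <= p)%nat ->
  ssum (Tb p) N = ssum (fun j => cot (phi_ p j) * Fs (N * p) (th_ p j)) (p - 1).
Proof.
  intros Hp.
  rewrite (ssum_ext (fun j => cot (phi_ p j) * Fs (N * p) (th_ p j))
    (fun j => ssum (fun n => ssum (fun r => cot (phi_ p j) * (sin (INR (S (n * p + r)) * th_ p j) / INR (S (n * p + r)))) p) N)).
  2:{ intros j _. unfold Fs. rewrite sum_blocks. rewrite <- ssum_scal. apply ssum_ext; intros.
      rewrite <- ssum_scal. reflexivity. }
  rewrite <- ssum_swap. apply ssum_ext. intros n _.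
  rewrite <- ssum_swap.
  replace p with (S (p - 1)) at 2 by lia. cbn [ssum].
  rewrite inner_last by auto. rewrite Rplus_0_r.
  unfold Tb. apply ssum_ext. intros r Hr. symmetry. apply inner_lt; auto.
Qed.

Lemma ssum_INR_S n : ssum (fun r => INR (S r)) n = INR n * (INR n + 1) / 2.
Proof. induction n; cbn [ssum]. simpl; field. rewrite IHn, !S_INR. field. Qed.

Lemma Gn_expand p N : (2 <= p)%nat ->
  Gn p N = INR p * INR N - (INR p + 1) / 2 +
    ssum (fun r => INR (S r) ^ 2 / (INR p * (INR N * INR p + INR (S r)))) p.
Proof.
  intros Hp. assert (HP : 0 < INR p) by (apply lt_0_INR; lia). pose proof (pos_INR N).
  unfold Gn, Hn. rewrite <- ssum_scal.
  rewrite (ssum_ext _ (fun r => INR N - / INR p * INR (S r) + INR (S r) ^ 2 / (INR p * (INR N * INR p + INR (S r))))).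
  2:{ intros r _. rewrite S_INR. pose proof (pos_INR r). field. split. nra. lra. }
  rewrite !ssum_add, ssum_sub, ssum_scal, ssum_const, ssum_INR_S. field. lra.
Qed.

Lemma EN_bound p N : (2 <= p)%nat ->
  Rabs (- Gn p N + ssum (Rn p) N) <= (INR p ^ 2 + INR p + 1) / (INR N + 1).
Proof.
  intros Hp. assert (HP : 2 <= INR p) by (replace 2 with (INR 2) by (simpl; ring); apply le_INR; lia).
  pose proof (pos_INR N) as HN.
  rewrite Gn_expand, Rn_sum by auto.
  set (Q := ssum (fun r => INR (S r) ^ 2 / (INR p * (INR N * INR p + INR (S r)))) p).
  assert (HNP : 0 <= INR N * INR p) by (apply Rmult_le_pos; lra).
  assert (HQ : 0 <= Q <= INR p ^ 2 / (INR N + 1)).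
  { unfold Q. split.
    - apply Rle_trans with (ssum (fun _ => 0) p). rewrite ssum_const; lra.
      apply ssum_le. intros r _. pose proof (pos_INR (S r)). apply Rmult_le_pos.
      apply pow_le; lra. apply Rlt_le, Rinv_0_lt_compat.
      assert (0 <= INR N * INR p) by (apply Rmult_le_pos; lra).
      assert (0 < INR (S r)) by (apply lt_0_INR; lia). apply Rmult_lt_0_compat; lra.
    - apply Rle_trans with (ssum (fun _ => INR p / (INR N + 1)) p).
      + apply ssum_le. intros r Hr. assert (INR (S r) <= INR p) by (apply le_INR; lia).
        pose proof (pos_INR r). rewrite S_INR in *. apply div_le. nra. lra.
        assert (INR N + 1 <= INR N * INR p + (INR r + 1)) by nra.
        assert ((INR r + 1) ^ 2 <= INR p * INR p) by nra.
        apply Rle_trans with (INR p * INR p * (INR N * INR p + (INR r + 1))).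
        apply Rmult_le_compat; nra. nra.
      + rewrite ssum_const. unfold Rdiv. lra. }
  assert (Ha : 0 <= (INR p - 1) / 2 * / (INR N * INR p + 1) <= INR p / (INR N + 1)).
  { split. apply Rmult_le_pos. lra. apply Rlt_le, Rinv_0_lt_compat. lra.
    replace ((INR p - 1) / 2 * / (INR N * INR p + 1)) with ((INR p - 1) / 2 / (INR N * INR p + 1)) by (unfold Rdiv; ring).
    apply div_le. lra. lra. nra. }
  assert (Hb : 0 < / (INR N + 1)) by (apply Rinv_0_lt_compat; lra).
  replace (- (INR p * INR N - (INR p + 1) / 2 + Q) + (INR p * INR N - (INR p - 1) / 2 * (1 - / (INR N * INR p + 1)) + / (INR N + 1) - 1))
    with (- Q + (INR p - 1) / 2 * / (INR N * INR p + 1) + / (INR N + 1)) by (field; split; lra).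
  apply Rabs_le.
  replace ((INR p ^ 2 + INR p + 1) / (INR N + 1)) with (INR p ^ 2 / (INR N + 1) + INR p / (INR N + 1) + / (INR N + 1)) by (field; lra).
  assert (0 <= INR p / (INR N + 1)) by (apply Rmult_le_pos; lra).
  split; lra.
Qed.

Lemma cv_from_bound (u : nat -> R) V K : 0 <= K ->
  (forall N, Rabs (u N - V) <= K / (INR N + /2)) -> Un_cv u V.
Proof.
  intros HK H eps Heps.
  destruct (archimed_cor1 (eps / (K + 1))) as [N0 [HN0 HN0p]].
  { apply Rdiv_lt_0_compat; lra. }
  exists N0. intros n Hn. unfold Rdist.
  eapply Rle_lt_trans. apply H.
  assert (HI : INR N0 <= INR n) by (apply le_INR; lia).
  assert (0 < INR N0) by (apply lt_0_INR; lia).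
  apply Rle_lt_trans with (K * / INR N0).
  - unfold Rdiv. apply Rmult_le_compat_l; auto. apply Rinv_le_contravar; lra.
  - apply Rle_lt_trans with (K * (eps / (K + 1))).
    apply Rmult_le_compat_l; lra.
    unfold Rdiv. rewrite <- Rmult_assoc. apply Rlt_le_trans with ((K+1) * eps * / (K + 1)).
    apply Rmult_lt_compat_r. apply Rinv_0_lt_compat; lra. nra.
    right; field; lra.
Qed.

Definition Bj (p j : nat) : R :=
  PI / (4 * sin (th_ p j / 2) ^ 2) + / (2 * sin (th_ p j / 2)).

Lemma th_range p j : (2 <= p)%nat -> (j < p - 1)%nat -> 0 < th_ p j < 2 * PI.
Proof.
  intros Hp Hj. pose proof PI_RGT_0. unfold th_.
  assert (HP : 0 < INR p) by (apply lt_0_INR; lia).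
  assert (INR (S j) < INR p) by (apply lt_INR; lia). pose proof (pos_INR (S j)).
  assert (0 < INR (S j)) by (apply lt_0_INR; lia).
  split. apply Rdiv_lt_0_compat; nra.
  apply Rmult_lt_reg_r with (INR p); auto. unfold Rdiv. rewrite Rmult_assoc, Rinv_l by lra. nra.
Qed.

Lemma saw_bound_N p j N : (2 <= p)%nat -> (j < p - 1)%nat ->
  Rabs (Fs (N * p) (th_ p j) - (PI - th_ p j) / 2) <= Bj p j / (INR N + /2).
Proof.
  intros Hp Hj. pose proof (th_range p j Hp Hj) as Ht.
  pose proof (saw_bound (N * p) (th_ p j) Ht) as H.
  eapply Rle_trans. apply H.
  set (s := sin (th_ p j / 2)). assert (Hs : 0 < s) by (apply sin_gt_0; lra).
  pose proof PI_RGT_0.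
  assert (HL : INR N + /2 <= INR (N * p) + /2).
  { apply Rplus_le_compat_r, le_INR. nia. }
  assert (0 < INR N + /2) by (pose proof (pos_INR N); lra).
  unfold Bj. fold s.
  replace (PI * / (4 * (INR (N * p) + / 2) * s ^ 2) + / (2 * (INR (N * p) + / 2) * s))
    with ((PI / (4 * s ^ 2) + / (2 * s)) / (INR (N * p) + / 2)) by (field; lra).
  unfold Rdiv at 1 3. apply Rmult_le_compat_l.
  - assert (0 < s ^ 2) by (apply pow_lt; lra).
    apply Rplus_le_le_0_compat; apply Rlt_le. apply Rdiv_lt_0_compat; lra.
    apply Rinv_0_lt_compat; lra.
  - apply Rinv_le_contravar; lra.
Qed.

Definition Vp (p : nat) : R := ssum (fun j => cot (phi_ p j) * ((PI - th_ p j) / 2)) (p - 1).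
Definition Cp (p : nat) : R :=
  ssum (fun j => Rabs (cot (phi_ p j)) * Bj p j) (p - 1) + (INR p ^ 2 + INR p + 1).

Lemma main_bound p N : (2 <= p)%nat ->
  Rabs (INR p * (INR p - 1) * (INR p - 2) * ssum (c0_term p) (N * p) - Vp p) <= Cp p / (INR N + /2).
Proof.
  intros Hp. rewrite partial_blocks, Tb_Fs by auto.
  assert (HN : 0 < INR N + /2) by (pose proof (pos_INR N); lra).
  replace (ssum (fun j => cot (phi_ p j) * Fs (N * p) (th_ p j)) (p - 1) - Gn p N + ssum (Rn p) N - Vp p)
    with (ssum (fun j => cot (phi_ p j) * (Fs (N * p) (th_ p j) - (PI - th_ p j) / 2)) (p - 1)
          + (- Gn p N + ssum (Rn p) N)).
  2:{ unfold Vp. rewrite (ssum_ext (fun j => cot (phi_ p j) * (Fs (N * p) (th_ p j) - (PI - th_ p j) / 2))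
        (fun j => cot (phi_ p j) * Fs (N * p) (th_ p j) - cot (phi_ p j) * ((PI - th_ p j) / 2))).
      rewrite ssum_sub. ring. intros; ring. }
  eapply Rle_trans. apply Rabs_triang.
  unfold Cp. replace ((ssum (fun j => Rabs (cot (phi_ p j)) * Bj p j) (p - 1) + (INR p ^ 2 + INR p + 1)) / (INR N + / 2))
    with (ssum (fun j => Rabs (cot (phi_ p j)) * Bj p j / (INR N + /2)) (p - 1) + (INR p ^ 2 + INR p + 1) / (INR N + / 2)).
  2:{ unfold Rdiv. rewrite ssum_scal_r. ring. }
  apply Rplus_le_compat.
  - apply ssum_abs_le. intros j Hj. rewrite Rabs_mult. unfold Rdiv. rewrite Rmult_assoc.
    apply Rmult_le_compat_l. apply Rabs_pos. apply saw_bound_N; auto.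
  - eapply Rle_trans. apply EN_bound; auto.
    assert (0 <= INR p ^ 2 + INR p + 1) by (pose proof (pos_INR p); nra).
    unfold Rdiv. apply Rmult_le_compat_l; auto. apply Rinv_le_contravar; auto. lra.
Qed.

Lemma Vp_c0 p : (2 <= p)%nat -> Vp p = PI * c0 1 p.
Proof.
  intros Hp. assert (HP : 0 < INR p) by (apply lt_0_INR; lia).
  unfold Vp, c0, sum_f. rewrite sum_f_R0_ssum. replace (S (p - 1 - 1)) with (p - 1)%nat by lia.
  rewrite (ssum_ext (fun j => cot (phi_ p j) * ((PI - th_ p j) / 2))
     (fun j => PI / 2 * cot (phi_ p j) + (- PI / INR p) * (INR (S j) * cot (phi_ p j)))).
  2:{ intros. unfold th_. field. lra. }
  rewrite ssum_add, !ssum_scal.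
  pose proof (cot_sum_zero p Hp) as Z. unfold phi_. rewrite Z.
  rewrite Rmult_0_r, Rplus_0_l.
  rewrite (ssum_ext (fun x => INR (x + 1) / INR p * cot (PI * INR (x + 1) * INR 1 / INR p))
     (fun i => / INR p * (INR (S i) * cot (PI * INR (S i) / INR p)))).
  2:{ intros j _. replace (j + 1)%nat with (S j) by lia. simpl (INR 1). unfold Rdiv. rewrite Rmult_1_r. ring. }
  rewrite ssum_scal. field. lra.
Qed.

Lemma c0_term_bounds p k : (2 <= p)%nat ->
  0 <= c0_term p k <= / ((INR k + 1) * (INR k + 2)).
Proof.
  intros Hp. unfold c0_term.
  assert (Hm : (p * Nat.div k p <= k)%nat) by (apply Nat.mul_div_le; lia).
  apply le_INR in Hm. rewrite mult_INR in Hm.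
  set (x := INR (Nat.div k p)) in *. set (P := INR p) in *. set (K := INR k) in *.
  assert (HP : 2 <= P) by (unfold P; replace 2 with (INR 2) by (simpl; ring); apply le_INR; lia).
  assert (Hx : 0 <= x) by apply pos_INR. assert (HK : 0 <= K) by apply pos_INR.
  assert (HD : 0 < (K + 1) * (K + P + 1) * (K + 2) * (K + P)).
  { repeat apply Rmult_lt_0_compat; lra. }
  assert (HN : 0 <= (K + 1 - P / 2 * x) * (x + 1)).
  { apply Rmult_le_pos; nra. }
  split.
  - unfold Rdiv. apply Rmult_le_pos; auto. apply Rlt_le, Rinv_0_lt_compat; auto.
  - rewrite <- (Rmult_1_l (/ ((K + 1) * (K + 2)))). fold (Rdiv 1 ((K + 1) * (K + 2))).
    apply div_le; auto. apply Rmult_lt_0_compat; lra.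
    assert (x + 1 <= K + P) by nra.
    assert ((x + 1) * (K + 1) <= (K + P) * (K + P + 1)) by (apply Rmult_le_compat; lra).
    assert (K + 1 - P / 2 * x <= K + 1) by nra.
    apply Rle_trans with ((K + 1) * (x + 1) * ((K + 1) * (K + 2))).
    apply Rmult_le_compat_r. apply Rmult_le_pos; lra. apply Rmult_le_compat_r; lra.
    replace ((K + 1) * (x + 1) * ((K + 1) * (K + 2))) with ((x + 1) * (K + 1) * ((K + 1) * (K + 2))) by ring.
    replace (1 * ((K + 1) * (K + P + 1) * (K + 2) * (K + P))) with ((K + P) * (K + P + 1) * ((K + 1) * (K + 2))) by ring.
    apply Rmult_le_compat_r; auto. apply Rmult_le_pos; lra.
Qed.

Lemma tele_sum n : ssum (fun k => / ((INR k + 1) * (INR k + 2))) n = 1 - / (INR n + 1).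
Proof.
  induction n; cbn [ssum]. simpl. field.
  rewrite IHn, S_INR. pose proof (pos_INR n). field. lra.
Qed.

Lemma subseq_cv (u : nat -> R) l (f : nat -> nat) : (forall N, (N <= f N)%nat) -> Un_cv u l -> Un_cv (fun N => u (f N)) l.
Proof.
  intros Hf H eps Heps. destruct (H eps Heps) as [N0 HN0]. exists N0. intros n Hn. apply HN0.
  specialize (Hf n). lia.
Qed.

Theorem theorem1 (p : nat) (hp : (2 <= p)%nat) :
  exists S : R,
    infinite_sum (c0_term p) S /\
    c0 1 p = INR p * (INR p - 1) * (INR p - 2) / PI * S.
Proof.
  destruct (growing_cv (sum_f_R0 (c0_term p))) as [l Hl].
  { intros n. simpl. pose proof (c0_term_bounds p (S n) hp). lra. }
  { exists 1. intros x [i ->]. rewrite sum_f_R0_ssum.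
    apply Rle_trans with (ssum (fun k => / ((INR k + 1) * (INR k + 2))) (S i)).
    apply ssum_le. intros. apply c0_term_bounds; auto.
    rewrite tele_sum. assert (0 < / (INR (S i) + 1)) by (apply Rinv_0_lt_compat; pose proof (pos_INR (S i)); lra). lra. }
  exists l. split. exact Hl.
  set (K := INR p * (INR p - 1) * (INR p - 2)).
  assert (HC : 0 <= Cp p).
  { unfold Cp. apply Rplus_le_le_0_compat.
    - apply Rle_trans with (ssum (fun _ => 0) (p - 1)). rewrite ssum_const; lra.
      apply ssum_le. intros j Hj. apply Rmult_le_pos. apply Rabs_pos.
      pose proof (th_range p j hp Hj). unfold Bj.
      assert (0 < sin (th_ p j / 2)) by (apply sin_gt_0; lra). pose proof PI_RGT_0.
      assert (0 < sin (th_ p j / 2) ^ 2) by (apply pow_lt; lra).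
      apply Rplus_le_le_0_compat; apply Rlt_le. apply Rdiv_lt_0_compat; lra. apply Rinv_0_lt_compat; lra.
    - pose proof (pos_INR p). nra. }
  assert (H1 : Un_cv (fun N => K * ssum (c0_term p) (S N * p)) (Vp p)).
  { apply cv_from_bound with (Cp p); auto. intros N.
    eapply Rle_trans. apply main_bound; auto.
    unfold Rdiv. apply Rmult_le_compat_l; auto. apply Rinv_le_contravar.
    pose proof (pos_INR N); lra. rewrite S_INR; lra. }
  assert (H2 : Un_cv (fun N => ssum (c0_term p) (S N * p)) l).
  { apply (subseq_cv (sum_f_R0 (c0_term p)) l (fun N => (S N * p - 1)%nat)) in Hl.
    2:{ intros N. simpl. nia. }
    intros eps Heps. destruct (Hl eps Heps) as [N0 HN0]. exists N0. intros n Hn.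
    specialize (HN0 n Hn). simpl in HN0. rewrite sum_f_R0_ssum in HN0.
    replace (S (p + n * p - 1)) with (S n * p)%nat in HN0 by (simpl; lia). exact HN0. }
  assert (H3 : Un_cv (fun N => K * ssum (c0_term p) (S N * p)) (K * l)).
  { apply (CV_mult (fun _ => K)); auto. intros eps Heps. exists O. intros. unfold Rdist.
    rewrite Rminus_diag, Rabs_R0. lra. }
  pose proof (UL_sequence _ _ _ H1 H3) as HV.
  rewrite Vp_c0 in HV by auto. pose proof PI_RGT_0.
  fold K. apply Rmult_eq_reg_l with PI. rewrite HV. field. lra. lra.
Qed.
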